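(* Let $N\ge 1$, let $\lambda,\mu$ be parameters, and let $\psi(\xi)=\xi\log\xi-\xi$. For $y,z\in\mathbb{R}^N$ (indices modulo $N$) define $$\Lambda(y,z;\nu)=\sum_{k=1}^N\psi(z_k-y_k)-\sum_{k=1}^N\psi(\nu+y_{k+1}-z_k).$$ Let $x,\widetilde{x},\widehat{x},\widehat{\widetilde{x}}\in\mathbb{R}^N$ (indices modulo $N$, all arguments of $\psi$ below lying in its domain) satisfy for all $k$ the corner equations $$(E)\ (\widetilde{x}_k-x_k)(\lambda+x_k-\widetilde{x}_{k-1})=(\widehat{x}_k-x_k)(\mu+x_k-\widehat{x}_{k-1}),$$ $$(E_1)\ (\widetilde{x}_k-x_k)(\lambda+x_{k+1}-\widetilde{x}_k)=(\widehat{\widetilde{x}}_k-\widetilde{x}_k)(\mu+\widetilde{x}_k-\widehat{\widetilde{x}}_{k-1}),$$ $$(E_2)\ (\widehat{x}_k-x_k)(\mu+x_{k+1}-\widehat{x}_k)=(\widehat{\widetilde{x}}_k-\widehat{x}_k)(\lambda+\widehat{x}_k-\widehat{\widetilde{x}}_{k-1}),$$ $$(E_{12})\ (\widehat{\widetilde{x}}_k-\widehat{x}_k)(\lambda+\widehat{x}_{k+1}-\widehat{\widetilde{x}}_k)=(\widehat{\widetilde{x}}_k-\widetilde{x}_k)(\mu+\widetilde{x}_{k+1}-\widehat{\widetilde{x}}_k).$$ Then the discrete multi-time Lagrangian 1-form is closed on this solution: $$\Lambda(x,\widetilde{x};\lambda)+\Lambda(\widetilde{x},\widehat{\widetilde{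x}};\mu)-\Lambda(x,\widehat{x};\mu)-\Lambda(\widehat{x},\widehat{\widetilde{x}};\lambda)=0.$$
   Context: $\Lambda(\cdot,\cdot;\nu)$ is the generating function of the Bäcklund transformation $F_\nu$ of the periodic dual Toda lattice $\ddot x_k=\dot x_k(x_{k+1}-2x_k+x_{k-1})$ via $p=-\partial\Lambda/\partial x$, $\widetilde p=\partial\Lambda/\partial\widetilde x$; the corner equations are obtained by eliminating momenta. Only periodic boundary conditions are considered. *)

(* Defs.v *)
(* concrete reals R. Vectors in R^N are functions nat -> R,
   with meaningful entries at indices 0..N-1; indices are taken modulo N. *)
From Stdlib Require Import Reals List Arith.
Import ListNotations.
Open Scope R_scope.

Definition psi (t : R) : R := t * ln t - t.

Definition nxt (N k : nat) : nat := ((k + 1) mod N)%nat.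
Definition prv (N k : nat) : nat := ((k + N - 1) mod N)%nat.

Definition sumN (N : nat) (f : nat -> R) : R :=
  fold_right Rplus 0 (map f (seq 0 N)).

Definition Lambda (N : nat) (y z : nat -> R) (nu : R) : R :=
  sumN N (fun k => psi (z k - y k)) - sumN N (fun k => psi (nu + y (nxt N k) - z k)).

Definition Lambda_dom (N : nat) (y z : nat -> R) (nu : R) : Prop :=
  forall k, (k < N)%nat -> 0 < z k - y k /\ 0 < nu + y (nxt N k) - z k.

(* Main.v *)
Require Import Defs.
From Stdlib Require Import Reals.
From Stdlib Require Import Lra Lia List Arith.
Open Scope R_scope.

Lemma ln_eq4 p q r s : 0 < p -> 0 < q -> 0 < r -> 0 < s -> p * q = r * s ->
  ln p + ln q = ln r + ln s.
Proof.
  intros. rewrite <- !ln_mult by assumption. now rewrite H3.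
Qed.

Lemma local_alg x1 t0 t1 h0 h1 X lam mu :
  (t1 - x1) * (lam + x1 - t0) = (h1 - x1) * (mu + x1 - h0) ->
  (X - h0) * (lam + h1 - X) = (X - t0) * (mu + t1 - X) ->
  0 < h1 - x1 -> 0 < lam + x1 - t0 -> 0 < X - t0 -> 0 < lam + h1 - X ->
  (lam + h1 - X) * (lam - mu + h0 - t0) = (lam + x1 - t0) * (lam - mu + h1 - t1) /\
  (mu + x1 - h0) * (lam + h1 - X) = (lam + x1 - t0) * (mu + t1 - X) /\
  (lam - mu + h0 - t0 = 0 -> lam = mu).
Proof.
  intros E E12 He Hb Hc Hh.
  assert (H1 : (h1 - x1) * (lam - mu + (h0 - t0)) = (h1 - t1) * (lam + x1 - t0)) by lra.
  assert (H2 : (X - t0) * (lam - mu + (h1 - t1)) = (h0 - t0) * (lam + h1 - X)) by lra.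
  set (T := lam - mu) in *. set (P := h0 - t0) in *. set (Q := h1 - t1) in *.
  set (U := T + P) in *. set (V := T + Q) in *.
  set (b := lam + x1 - t0) in *. set (e := h1 - x1) in *. set (c := X - t0) in *. set (h := lam + h1 - X) in *.
  assert (HX : h * U = b * V).
  { destruct (Req_dec (T + P + Q) 0) as [HD|HD].
    - assert (HQ : Q = 0).
      { assert (U = - Q) by (unfold U; lra).
        rewrite H in H1. assert (Q * (e + b) = 0) by lra. 
        apply Rmult_integral in H0. destruct H0; [assumption|lra]. }
      assert (HP : P = 0).
      { assert (V = - P) by (unfold V; lra).
        rewrite H in H2. assert (P * (c + h) = 0) by lra.
        apply Rmult_integral in H0. destruct H0; [assumption|lra]. }
      assert (U = 0) by (unfold U; lra). assert (V = 0) by (unfold V; lra).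
      rewrite H, H0. ring.
    - assert (Hid : (T + P + Q) * (h * U - b * V) = V * (e * U - Q * b) - U * (c * V - P * h))
        by (unfold h, U, b, V, e, Q, c, P, T; ring).
      rewrite H1, H2 in Hid. replace (Q * b - Q * b) with 0 in Hid by ring.
      replace (P * h - P * h) with 0 in Hid by ring.
      assert ((T + P + Q) * (h * U - b * V) = 0) by lra.
      apply Rmult_integral in H. destruct H; [lra|lra]. }
  split; [|split].
  - unfold U, V, P, Q in HX; lra.
  - unfold h, b in HX |- *. unfold U, V, T, P, Q in HX. clear -HX. lra.
  - intro Hu. assert (H : U = 0) by (unfold U, P; unfold T in Hu |- *; clear - Hu; lra).
    rewrite H in H1. assert (Q * b = 0) by lra.
    apply Rmult_integral in H0. destruct H0 as [HQ|HQ]; [|lra].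
    rewrite H in HX. assert (b * V = 0) by lra.
    apply Rmult_integral in H0. destruct H0 as [HV|HV]; [lra|].
    unfold V in HV. unfold T in HV. lra.
Qed.

Lemma nxt_lt N k : (1 <= N)%nat -> (nxt N k < N)%nat.
Proof. intros. unfold nxt. apply Nat.mod_upper_bound. lia. Qed.

Lemma prv_nxt N k : (1 <= N)%nat -> (k < N)%nat -> prv N (nxt N k) = k.
Proof.
  intros HN Hk. unfold prv, nxt.
  destruct (Nat.eq_dec (k + 1) N) as [Heq|Hne].
  - rewrite Heq, Nat.mod_same by lia. simpl.
    rewrite Nat.mod_small by lia. lia.
  - rewrite (Nat.mod_small (k+1)) by lia.
    replace (k + 1 + N - 1)%nat with (k + 1 * N)%nat by lia.
    rewrite Nat.mod_add by lia. apply Nat.mod_small. lia.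
Qed.

Lemma fold_app (l1 l2 : list R) :
  fold_right Rplus 0 (l1 ++ l2) = fold_right Rplus 0 l1 + fold_right Rplus 0 l2.
Proof. induction l1; simpl; lra. Qed.

Lemma sumN_ext N f g : (forall k, (k < N)%nat -> f k = g k) -> sumN N f = sumN N g.
Proof.
  intros H. unfold sumN. f_equal. apply map_ext_in. intros a Ha.
  apply in_seq in Ha. apply H. lia.
Qed.

Lemma sumN_minus N f g : sumN N (fun k => f k - g k) = sumN N f - sumN N g.
Proof. unfold sumN. induction (seq 0 N); simpl; lra. Qed.

Lemma sumN_shift N f : (1 <= N)%nat -> sumN N (fun k => f (nxt N k)) = sumN N f.
Proof.
  intros HN. destruct N as [|M]; [lia|].
  unfold sumN.
  assert (Hm : map (fun k => f (nxt (S M) k)) (seq 0 (S M)) = map f (seq 1 M) ++ (f 0%nat :: nil)).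
  { rewrite seq_S, map_app. f_equal.
    - rewrite <- seq_shift, map_map. apply map_ext_in. intros a Ha.
      apply in_seq in Ha. unfold nxt. rewrite Nat.mod_small by lia.
      f_equal. lia.
    - cbn [map]. unfold nxt. replace (0 + M + 1)%nat with (1 * S M)%nat by lia.
      rewrite Nat.mod_mul by lia. reflexivity. }
  rewrite Hm, fold_app. change (seq 0 (S M)) with (0%nat :: seq 1 M).
  cbn [map fold_right]. lra.
Qed.

Definition Fk N lam mu (x xt xh xth : nat -> R) k :=
  psi (xt k - x k) - psi (lam + x (nxt N k) - xt k)
  + psi (xth k - xt k) - psi (mu + xt (nxt N k) - xth k)
  - psi (xh k - x k) + psi (mu + x (nxt N k) - xh k)
  - psi (xth k - xh k) + psi (lam + xh (nxt N k) - xth k).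

Definition Zk N lam mu (x xt xh xth : nat -> R) k :=
  xt k - xh k
  - x k * (- ln (xt k - x k) + ln (xh k - x k))
  - xt k * (ln (xt k - x k) + ln (lam + x (nxt N k) - xt k) - ln (xth k - xt k))
  - xh k * (- ln (xh k - x k) - ln (mu + x (nxt N k) - xh k) + ln (xth k - xh k))
  + (lam - mu) * ln (Rabs (lam - mu + xh k - xt k)).

Lemma step (N : nat) (lam mu : R) (x xt xh xth : nat -> R) k :
  (1 <= N)%nat -> (k < N)%nat ->
  Lambda_dom N x xt lam -> Lambda_dom N xt xth mu ->
  Lambda_dom N x xh mu -> Lambda_dom N xh xth lam ->
  (forall k, (k < N)%nat ->
     (xt k - x k) * (lam + x k - xt (prv N k))
     = (xh k - x k) * (mu + x k - xh (prv N k))) ->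
  (forall k, (k < N)%nat ->
     (xt k - x k) * (lam + x (nxt N k) - xt k)
     = (xth k - xt k) * (mu + xt k - xth (prv N k))) ->
  (forall k, (k < N)%nat ->
     (xh k - x k) * (mu + x (nxt N k) - xh k)
     = (xth k - xh k) * (lam + xh k - xth (prv N k))) ->
  (forall k, (k < N)%nat ->
     (xth k - xh k) * (lam + xh (nxt N k) - xth k)
     = (xth k - xt k) * (mu + xt (nxt N k) - xth k)) ->
  Fk N lam mu x xt xh xth k = Zk N lam mu x xt xh xth (nxt N k) - Zk N lam mu x xt xh xth k.
Proof.
  intros HN Hk D1 D2 D3 D4 E E1 E2 E12.
  assert (Hk' : (nxt N k < N)%nat) by (apply nxt_lt; exact HN).
  assert (Hp : prv N (nxt N k) = k) by (apply prv_nxt; assumption).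
  pose proof (E _ Hk') as Ek. pose proof (E1 _ Hk') as E1k.
  pose proof (E2 _ Hk') as E2k. pose proof (E12 _ Hk) as E12k.
  rewrite Hp in Ek, E1k, E2k.
  destruct (D1 _ Hk) as [Ha Hb]. destruct (D1 _ Hk') as [Ha' Hb'].
  destruct (D2 _ Hk) as [Hc Hd]. destruct (D2 _ Hk') as [Hc' Hd'].
  destruct (D3 _ Hk) as [He Hf]. destruct (D3 _ Hk') as [He' Hf'].
  destruct (D4 _ Hk) as [Hg Hh]. destruct (D4 _ Hk') as [Hg' Hh'].
  unfold Fk, Zk, psi.
  set (k' := nxt N k) in *.
  pose proof (ln_eq4 _ _ _ _ Ha' Hb He' Hf Ek) as L1.
  pose proof (ln_eq4 _ _ _ _ Ha' Hb' Hc' Hd E1k) as L2.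
  pose proof (ln_eq4 _ _ _ _ He' Hf' Hg' Hh E2k) as L3.
  pose proof (ln_eq4 _ _ _ _ Hg Hh Hc Hd E12k) as L4.
  destruct (local_alg (x k') (xt k) (xt k') (xh k) (xh k') (xth k) lam mu Ek E12k He' Hb Hc Hh)
    as [HI [HII HIII]].
  pose proof (ln_eq4 _ _ _ _ Hf Hh Hb Hd HII) as L5.
  assert (L6 : (lam - mu) * (ln (lam + xh k' - xth k) - ln (lam + x k' - xt k))
             = (lam - mu) * (ln (Rabs (lam - mu + xh k' - xt k')) - ln (Rabs (lam - mu + xh k - xt k)))).
  { destruct (Req_dec lam mu) as [Heq|Hne].
    - rewrite Heq. ring.
    - assert (Hu : lam - mu + xh k - xt k <> 0) by (intro Hu; apply Hne; apply HIII; exact Hu).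
      assert (Hu' : lam - mu + xh k' - xt k' <> 0).
      { intro Hu'. rewrite Hu' in HI. rewrite Rmult_0_r in HI.
        apply Rmult_integral in HI. destruct HI; lra. }
      assert (HA : (lam + xh k' - xth k) * Rabs (lam - mu + xh k - xt k)
                 = (lam + x k' - xt k) * Rabs (lam - mu + xh k' - xt k')).
      { rewrite <- (Rabs_pos_eq (lam + xh k' - xth k)) by lra.
        rewrite <- (Rabs_pos_eq (lam + x k' - xt k)) by lra.
        rewrite <- !Rabs_mult. now rewrite HI. }
      pose proof (ln_eq4 _ _ _ _ Hh (Rabs_pos_lt _ Hu) Hb (Rabs_pos_lt _ Hu') HA).
      f_equal. lra. }
  assert (P1 : x k' * (ln (xt k' - x k') + ln (lam + x k' - xt k) - ln (xh k' - x k') - ln (mu + x k' - xh k)) = 0)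
    by (rewrite L1; ring).
  assert (P2 : xt k' * (ln (xt k' - x k') + ln (lam + x (nxt N k') - xt k') - ln (xth k' - xt k') - ln (mu + xt k' - xth k)) = 0)
    by (rewrite L2; ring).
  assert (P3 : xh k' * (ln (xh k' - x k') + ln (mu + x (nxt N k') - xh k') - ln (xth k' - xh k') - ln (lam + xh k' - xth k)) = 0)
    by (rewrite L3; ring).
  assert (P4 : xth k * (ln (xth k - xh k) + ln (lam + xh k' - xth k) - ln (xth k - xt k) - ln (mu + xt k' - xth k)) = 0)
    by (rewrite L4; ring).
  assert (P5 : mu * (ln (mu + x k' - xh k) + ln (lam + xh k' - xth k) - ln (lam + x k' - xt k) - ln (mu + xt k' - xth k)) = 0) by (rewrite L5; ring).
  clearbody k'. clear - P1 P2 P3 P4 P5 L6. lra.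
Qed.


Theorem theorem5 (N : nat) (lam mu : R) (x xt xh xth : nat -> R) :
  (1 <= N)%nat ->
  Lambda_dom N x xt lam -> Lambda_dom N xt xth mu ->
  Lambda_dom N x xh mu -> Lambda_dom N xh xth lam ->
  (forall k, (k < N)%nat ->
     (xt k - x k) * (lam + x k - xt (prv N k))
     = (xh k - x k) * (mu + x k - xh (prv N k))) ->
  (forall k, (k < N)%nat ->
     (xt k - x k) * (lam + x (nxt N k) - xt k)
     = (xth k - xt k) * (mu + xt k - xth (prv N k))) ->
  (forall k, (k < N)%nat ->
     (xh k - x k) * (mu + x (nxt N k) - xh k)
     = (xth k - xh k) * (lam + xh k - xth (prv N k))) ->
  (forall k, (k < N)%nat ->
     (xth k - xh k) * (lam + xh (nxt N k) - xth k)
     = (xth k - xt k) * (mu + xt (nxt N k) - xth k)) ->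
  Lambda N x xt lam + Lambda N xt xth mu - Lambda N x xh mu - Lambda N xh xth lam = 0.
Proof.
  intros HN D1 D2 D3 D4 E E1 E2 E12.
  assert (Hs : Lambda N x xt lam + Lambda N xt xth mu - Lambda N x xh mu - Lambda N xh xth lam
               = sumN N (Fk N lam mu x xt xh xth)).
  { unfold Lambda, sumN, Fk. induction (seq 0 N) as [|a l IH]; simpl; lra. }
  rewrite Hs.
  rewrite (sumN_ext N _ (fun k => Zk N lam mu x xt xh xth (nxt N k) - Zk N lam mu x xt xh xth k)).
  - rewrite sumN_minus, (sumN_shift N (Zk N lam mu x xt xh xth)) by exact HN. ring.
  - intros k Hk. apply step; assumption.
Qed.
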